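(* Let $H$ be a Hermitian operator on $\mathcal{H}=(\mathbb{C}^2)^{\otimes n}$ with eigenvalues $E_1\le E_2\le\cdots\le E_{2^n}$ (with multiplicity) and an orthonormal eigenbasis $|\varphi_1\rangle,\dots,|\varphi_{2^n}\rangle$, $H|\varphi_l\rangle=E_l|\varphi_l\rangle$. Let $E_g=E_1$, $|\Psi_g\rangle=|\varphi_1\rangle$, $\Delta=E_2-E_1$. Let $|\Psi_0\rangle$ be a normalised state with $p_g=|\langle\Psi_g|\Psi_0\rangle|^2>0$. For $\tau>0$ let $|\chi_\tau\rangle=e^{-\frac12(H-E_g)^2\tau^2}|\Psi_0\rangle$ and $E(\tau)=\langle\chi_\tau|H|\chi_\tau\rangle/\langle\chi_\tau|\chi_\tau\rangle$. Then $$E(\tau)-E_g\le\frac{1-p_g}{p_g}\,e^{-\tilde\Delta^2\tau^2}\,\tilde\Delta,\qquad \tilde\Delta=\max\{\Delta,(\sqrt2\,\tau)^{-1}\}.$$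
   Context: In the paper, $|\chi_\tau\rangle$ is (up to a positive scalar factor) the random-circuit variational state obtained from the Hamiltonian ansatz with a specific network configuration, and $E(\tau)$ is its energy. *)

(* Defs.v *)
From HB Require Import structures.
From mathcomp Require Import all_boot all_order all_algebra.
From mathcomp Require Import reals.
From mathcomp Require Import sequences exp.
From mathcomp Require Import complex.
Set Implicit Arguments. Unset Strict Implicit. Unset Printing Implicit Defensive.
Import Order.TTheory GRing.Theory Num.Theory.
Local Open Scope ring_scope.
Local Open Scope complex_scope.

Definition cdot (R : realType) (N : nat) (u v : 'cV[R[i]]_N) : R[i] :=
  \sum_(k < N) (u k 0)^* * v k 0.

Definition bra (R : realType) (N : nat) (v : 'cV[R[i]]_N) : 'rV[R[i]]_N :=
  \row_(k < N) (v k 0)^*.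

Definition hermitian_mx (R : realType) (N : nat) (H : 'M[R[i]]_N) : Prop :=
  forall j k : 'I_N, H j k = (H k j)^*.

(* Orthonormal family of N vectors (hence an orthonormal basis of C^N). *)
Definition orthonormal_basis (R : realType) (N : nat) (phi : 'I_N -> 'cV[R[i]]_N) : Prop :=
  forall l m : 'I_N, cdot (phi l) (phi m) = (if l == m then 1 else 0).

Definition spectral_fun (R : realType) (N : nat) (E : 'I_N -> R)
  (phi : 'I_N -> 'cV[R[i]]_N) (f : R -> R) : 'M[R[i]]_N :=
  \sum_(l < N) (f (E l))%:C *: (phi l *m bra (phi l)).

Definition gauss_filter (R : realType) (N : nat) (E : 'I_N -> R)
  (phi : 'I_N -> 'cV[R[i]]_N) (Eg tau : R) : 'M[R[i]]_N :=
  spectral_fun E phi (fun x => expR (- (1/2) * (x - Eg) ^+ 2 * tau ^+ 2)).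

Definition cabs2 (R : realType) (z : R[i]) : R := complex.Re z ^+ 2 + complex.Im z ^+ 2.

(* Main.v *)
Require Import Defs.
From HB Require Import structures.
From mathcomp Require Import all_boot all_order all_algebra.
From mathcomp Require Import reals.
From mathcomp Require Import sequences exp.
From mathcomp Require Import complex.
From mathcomp Require Import ring lra.
Import Order.TTheory GRing.Theory Num.Theory.
Local Open Scope ring_scope.
Local Open Scope complex_scope.

Section LA.
Variable R : realType.
Variable N : nat.
Implicit Types u v : 'cV[R[i]]_N.

Lemma cabs2_conj (z : R[i]) : z^* * z = (cabs2 z)%:C.
Proof. case: z => a b; rewrite /cabs2 /=; simpc; apply/eqP; rewrite eq_complex /=; apply/andP; split; apply/eqP; ring. Qed.

Lemma term_eq (a : R) (z b : R[i]) : (a%:C * z)^* * (a%:C * z * b) = (a^+2 * cabs2 z)%:C * b.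
Proof.
case: z => x y; case: b => u v; rewrite /cabs2 /=. simpc. apply/eqP; rewrite eq_complex /=; apply/andP; split; apply/eqP; ring.
Qed.

Lemma cabs2_ge0 (z : R[i]) : 0 <= cabs2 z.
Proof. by rewrite /cabs2 addr_ge0 ?sqr_ge0. Qed.

Definition adj {m p} (A : 'M[R[i]]_(m, p)) : 'M[R[i]]_(p, m) := \matrix_(i, j) (A j i)^*.

Lemma adjM m p q (A : 'M[R[i]]_(m, p)) (B : 'M[R[i]]_(p, q)) : adj (A *m B) = adj B *m adj A.
Proof.
apply/matrixP => i j; rewrite !mxE rmorph_sum; apply: eq_bigr => k _.
by rewrite !mxE rmorphM mulrC.
Qed.

Lemma adjK m p (A : 'M[R[i]]_(m, p)) : adj (adj A) = A.
Proof. by apply/matrixP => i j; rewrite !mxE conjcK. Qed.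

Lemma cdotE u v : cdot u v = (adj u *m v) 0 0.
Proof. by rewrite /cdot mxE; apply: eq_bigr => k _; rewrite mxE. Qed.

Lemma bra_mul u v : bra u *m v = (cdot u v)%:M.
Proof.
apply/matrixP => i j; rewrite !ord1 !mxE eqxx mulr1n /cdot.
by apply: eq_bigr => k _; rewrite mxE.
Qed.

Lemma cdot_sumr u (a : 'I_N -> R[i]) (w : 'I_N -> 'cV[R[i]]_N) :
  cdot u (\sum_l a l *: w l) = \sum_l a l * cdot u (w l).
Proof.
rewrite /cdot.
under eq_bigr => k _ do rewrite summxE big_distrr /=.
rewrite exchange_big /=; apply: eq_bigr => l _; rewrite big_distrr /=.
by apply: eq_bigr => k _; rewrite mxE mulrCA.
Qed.

Lemma cdot_suml w (a : 'I_N -> R[i]) (u : 'I_N -> 'cV[R[i]]_N) :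
  cdot (\sum_l a l *: u l) w = \sum_l (a l)^* * cdot (u l) w.
Proof.
rewrite /cdot.
under eq_bigr => k _ do rewrite summxE rmorph_sum big_distrl /=.
rewrite exchange_big /=; apply: eq_bigr => l _; rewrite big_distrr /=.
by apply: eq_bigr => k _; rewrite mxE rmorphM mulrA.
Qed.

Lemma sum_delta (b : 'I_N -> R[i]) l :
  \sum_m b m * (if l == m then 1 else 0) = b l.
Proof.
rewrite (bigD1 l) //= eqxx mulr1 big1 ?addr0 // => m /negbTE.
by rewrite eq_sym => ->; rewrite mulr0.
Qed.

Lemma complete (phi : 'I_N -> 'cV[R[i]]_N) v : orthonormal_basis phi ->
  \sum_l (cdot (phi l) v)^* * cdot (phi l) v = cdot v v.
Proof.
move=> onb.
pose P : 'M[R[i]]_N := \matrix_(k, l) phi l k 0.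
have QP : adj P *m P = 1%:M.
  apply/matrixP => l m.
  have -> : (1%:M : 'M[R[i]]_N) l m = cdot (phi l) (phi m) by rewrite onb mxE; case: eqP.
  rewrite mxE /cdot; apply: eq_bigr => k _.
  by rewrite !mxE.
have PQ := mulmx1C QP.
have ce l : cdot (phi l) v = (adj P *m v) l 0.
  by rewrite /cdot mxE; apply: eq_bigr => k _; rewrite !mxE.
under eq_bigr => l _ do rewrite ce.
have -> : \sum_l ((adj P *m v) l 0)^* * (adj P *m v) l 0 = cdot (adj P *m v) (adj P *m v) by [].
by rewrite cdotE adjM adjK -mulmxA (mulmxA P) PQ mul1mx -cdotE.
Qed.

End LA.
Lemma gbound_aux (R : realType) (D x tau : R) :
  0 < D -> 0 <= x -> 1 <= 2 * D^+2 * tau^+2 ->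
  (D <= x \/ 2 * D^+2 * tau^+2 = 1) ->
  x * expR (- (x^+2 * tau^+2)) <= D * expR (- (D^+2 * tau^+2)).
Proof.
move=> D0 x0 h1 hc.
have key : x <= D * (1 + (x^+2 - D^+2) * tau^+2).
  case: hc => [hx|he].
  - have t0 : 0 <= tau^+2 by apply: sqr_ge0.
    have : 0 <= (x - D) * (D * (x + D) * tau^+2 - 1).
      apply: mulr_ge0; first lra.
      have : D * D * tau ^+2 <= D * x * tau^+2.
        by apply: ler_wpM2r => //; apply: ler_wpM2l => //; lra.
      rewrite expr2 in h1 *; nra.
    rewrite !expr2 in h1 t0 *; nra.
  - have : 0 <= (x - D)^+2 by apply: sqr_ge0.
    rewrite !expr2 in he *; nra.
have e1 : expR (- (x^+2 * tau^+2)) = (expR ((x^+2 - D^+2) * tau^+2))^-1 * expR (- (D^+2 * tau^+2)).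
  have -> : (expR ((x^+2 - D^+2) * tau^+2))^-1 = expR (- ((x^+2 - D^+2) * tau^+2)) by rewrite expRN.
  by rewrite -expRD; apply: congr1; ring.
rewrite e1 mulrA ler_wpM2r ?expR_ge0 //.
have ep := expR_gt0 ((x ^+ 2 - D ^+ 2) * tau ^+ 2).
rewrite ler_pdivrMr //.
apply: (le_trans key); rewrite ler_wpM2l //; [lra|]; rewrite mulrC; exact: expR_ge1Dx.
Qed.

Theorem lemma1 (R : realType) (n : nat) (H : 'M[R[i]]_(2 ^ n))
  (E : 'I_(2 ^ n) -> R) (phi : 'I_(2 ^ n) -> 'cV[R[i]]_(2 ^ n))
  (i1 i2 : 'I_(2 ^ n)) (Psi0 : 'cV[R[i]]_(2 ^ n)) (tau : R) :
  hermitian_mx H ->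
  (forall l m : 'I_(2 ^ n), (l <= m)%N -> E l <= E m) ->
  orthonormal_basis phi ->
  (forall l : 'I_(2 ^ n), H *m phi l = (E l)%:C *: phi l) ->
  val i1 = 0%N -> val i2 = 1%N ->
  cdot Psi0 Psi0 = 1 ->
  let Eg := E i1 in
  let Psig := phi i1 in
  let Delta := E i2 - E i1 in
  let pg := cabs2 (cdot Psig Psi0) in
  0 < pg ->
  0 < tau ->
  let chi := gauss_filter E phi Eg tau *m Psi0 in
  let Etau := cdot chi (H *m chi) / cdot chi chi in
  let Dt := Num.max Delta (Num.sqrt 2 * tau)^-1 in
  Etau - Eg%:C <= ((1 - pg) / pg * expR (- (Dt ^+ 2 * tau ^+ 2)) * Dt)%:C.
Proof.
move=> _ hmono onb heig hi1 hi2 hpsi Eg Psig Delta pg pg0 tau0.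
cbv zeta.
set chi := gauss_filter E phi Eg tau *m Psi0.
set Dt := Num.max Delta _.
pose f l := expR (- (1/2) * (E l - Eg) ^+ 2 * tau ^+ 2).
pose c l := cdot (phi l) Psi0.
pose w l := cabs2 (c l).
have chiE : chi = \sum_l ((f l)%:C * c l) *: phi l.
  rewrite /chi /gauss_filter /spectral_fun mulmx_suml; apply: eq_bigr => l _.
  by rewrite -scalemxAl -mulmxA bra_mul mul_mx_scalar scalerA.
have HchiE : H *m chi = \sum_l ((f l)%:C * c l * (E l)%:C) *: phi l.
  rewrite chiE mulmx_sumr; apply: eq_bigr => l _.
  by rewrite -scalemxAr heig scalerA.
have den : cdot chi chi = (\sum_l f l ^+ 2 * w l)%:C.
  rewrite {1}chiE cdot_suml rmorph_sum; apply: eq_bigr => l _.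
  rewrite chiE cdot_sumr.
  under eq_bigr => m _ do rewrite onb.
  by rewrite sum_delta -[X in _ * X]mulr1 term_eq mulr1.
have num : cdot chi (H *m chi) = (\sum_l f l ^+ 2 * w l * E l)%:C.
  rewrite HchiE chiE cdot_suml rmorph_sum; apply: eq_bigr => l _.
  rewrite cdot_sumr.
  under eq_bigr => m _ do rewrite onb.
  by rewrite sum_delta term_eq -rmorphM.
rewrite num den -fmorph_div -rmorphB lecR.
pose x l := E l - Eg.
have hx l : 0 <= x l.
  by rewrite /x subr_ge0; apply: hmono; rewrite hi1.
have hF l : f l ^+ 2 = expR (- (x l ^+ 2 * tau ^+ 2)).
  by rewrite /f /x expr2 -expRD; congr (expR _); field.
have w0 l : 0 <= w l by apply: cabs2_ge0.
have xi1 : x i1 = 0 by rewrite /x subrr.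
have wi1 : w i1 = pg by [].
have sumw : \sum_l w l = 1.
  apply: complexI; rewrite rmorph1 rmorph_sum /= -hpsi -(@complete R _ phi Psi0 onb).
  by apply: eq_bigr => l _; rewrite cabs2_conj.
have sumw' : \sum_(l | l != i1) w l = 1 - pg.
  by rewrite -sumw [in RHS](bigD1 i1) //= wi1 addrC addrK.
have pg1 : 0 <= 1 - pg by rewrite -sumw'; apply: sumr_ge0.
set Den := \sum_l f l ^+ 2 * w l.
have hDen : pg <= Den.
  rewrite /Den (bigD1 i1) //= hF xi1 expr0n /= mul0r oppr0 expR0 mul1r -wi1 lerDl.
  by apply: sumr_ge0 => l _; rewrite mulr_ge0 ?sqr_ge0.
have Den0 : 0 < Den by apply: lt_le_trans hDen.
set s := (Num.sqrt 2 * tau)^-1.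
have s0 : 0 < s by rewrite invr_gt0 mulr_gt0 ?sqrtr_gt0.
have s2 : 2 * s ^+ 2 * tau ^+ 2 = 1.
  rewrite /s exprVn exprMn sqr_sqrtr ?ler0n //.
  by field; rewrite gt_eqF.
have Dt0 : s <= Dt by rewrite /Dt le_max lexx orbT.
have Dtp : 0 < Dt by apply: lt_le_trans Dt0.
have Dt2 : 1 <= 2 * Dt ^+ 2 * tau ^+ 2.
  have ss : s ^+ 2 <= Dt ^+ 2 by rewrite !expr2 ler_pM // ltW.
  apply: (le_trans (_ : 1 <= 2 * s ^+ 2 * tau ^+ 2)); first by rewrite s2.
  apply: ler_wpM2r; first exact: sqr_ge0.
  by rewrite ler_pM2l.
set G := Dt * expR (- (Dt ^+ 2 * tau ^+ 2)).
have hG0 : 0 <= G by rewrite mulr_ge0 ?expR_ge0 // ltW.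
have hterm l : l != i1 -> x l * f l ^+ 2 <= G.
  move=> hl; rewrite hF.
  have hD : Delta <= x l.
    rewrite /x /Delta /Eg lerD2r; apply: hmono; rewrite hi2.
    have : val l != 0%N by move: hl; apply: contra => /eqP h; apply/eqP/val_inj; rewrite /= h hi1.
    by rewrite lt0n.
  apply: gbound_aux => //.
  have [hxD|hxD] := leP Dt (x l); first by left.
  right; have -> : Dt = s; last exact: s2.
  rewrite /Dt max_r //; apply: ltW; apply: (le_lt_trans hD).
  move: hxD; rewrite /Dt lt_max => /orP [h|h] //.
  by move: h; rewrite ltNge hD.
set S := \sum_l f l ^+ 2 * w l * E l.
have SE : S - Eg * Den = \sum_l w l * (x l * f l ^+ 2).
  rewrite /S /Den mulr_sumr -sumrB; apply: eq_bigr => l _; rewrite /x; ring.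
have hS : S - Eg * Den <= (1 - pg) * G.
  rewrite SE (bigD1 i1) //= xi1 mul0r mulr0 add0r -sumw' mulr_suml.
  by apply: ler_sum => l hl; rewrite ler_wpM2l // hterm.
have hS0 : 0 <= S - Eg * Den.
  by rewrite SE; apply: sumr_ge0 => l _; rewrite mulr_ge0 // mulr_ge0 ?sqr_ge0.
have -> : S / Den - Eg = (S - Eg * Den) / Den.
  by field; rewrite gt_eqF.
set K := (1 - pg) / pg * expR (- (Dt ^+ 2 * tau ^+ 2)) * Dt.
have K0 : 0 <= K.
  apply: mulr_ge0; last exact: ltW.
  apply: mulr_ge0; last exact: expR_ge0.
  by apply: divr_ge0 => //; exact: ltW.
have KE : K * pg = (1 - pg) * G.
  by rewrite /K /G; field; rewrite gt_eqF.
rewrite ler_pdivrMr //; apply: (le_trans hS); rewrite -KE.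
exact: ler_wpM2l.
Qed.
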